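(* Let $f$ be a homeomorphism of a compact metric space $(X,d)$ and let $x\in X$ be a minimally expansive point of $f$ with expansivity constant $\mathfrak{c}>0$. Then for each $y\in B(x,\mathfrak{c})$ and each $0<\epsilon<\mathfrak{c}$ there exists $N\in\mathbb{N}$ such that for every pair $u,v\in\mathcal{O}_f(y)$ satisfying $d(f^n(u),f^n(v))<\mathfrak{c}$ for all $-N\le n\le N$, we have $d(u,v)<\epsilon$.
   Context: $B(x,\epsilon)=\{y: d(x,y)<\epsilon\}$, $\mathcal{O}_f(y)=\{f^n(y):n\in\mathbb{Z}\}$. $f$ is expansive on $A\subset X$ with expansivity constant $\mathfrak{c}$ if for all distinct $a,b\in A$ there is $n\in\mathbb{Z}$ with $d(f^n(a),f^n(b))>\mathfrak{c}$. A point $x$ is a minimally expansive point of $f$ with expansivity constant $\mathfrak{c}>0$ if for each $y\in B(x,\mathfrak{c})$, $f$ is expansive on $\overline{\mathcal{O}_f(y)}$ with expansivity constant $\mathfrak{c}$. *)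

(* Defs.v *)
From HB Require Import structures.
From mathcomp Require Import all_boot all_order all_algebra.
From mathcomp Require Import all_classical all_reals all_analysis.
Set Implicit Arguments. Unset Strict Implicit. Unset Printing Implicit Defensive.
Import Order.TTheory GRing.Theory Num.Theory.
Local Open Scope classical_set_scope.
Local Open Scope ring_scope.

Definition homeo_with {X : topologicalType} (f g : X -> X) : Prop :=
  cancel f g /\ cancel g f /\ continuous f /\ continuous g.

Definition zit {X : Type} (f g : X -> X) (n : int) : X -> X :=
  match n with
  | Posz m => iter m f
  | Negz m => iter m.+1 g
  end.

Definition orbit_z {X : Type} (f g : X -> X) (y : X) : set X :=
  [set z | exists n : int, z = zit f g n y].

Definition mball {R : realType} {X : metricType R} (x : X) (e : R) : set X :=
  [set y | mdist x y < e].

Definition expansive_on {R : realType} {X : metricType R} (f g : X -> X)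
  (A : set X) (c : R) : Prop :=
  forall a b, A a -> A b -> a <> b ->
    exists n : int, mdist (zit f g n a) (zit f g n b) > c.

Definition minimally_expansive_point {R : realType} {X : metricType R}
  (f g : X -> X) (x : X) (c : R) : Prop :=
  0 < c /\ forall y, mball x c y -> expansive_on f g (closure (orbit_z f g y)) c.

(* Main.v *)
Require Import Defs.
From HB Require Import structures.
From mathcomp Require Import all_boot all_order all_algebra.
From mathcomp Require Import all_classical all_reals all_analysis.
From mathcomp Require Import lra.
Import Order.TTheory GRing.Theory Num.Theory.
Local Open Scope classical_set_scope.
Local Open Scope ring_scope.

Section Helpers.
Variables (R : realType) (X : metricType R).

Lemma key_nbhs (F : X -> X) (cF : continuous F) (a b : X) (d : R) :
  0 < d ->
  nbhs (a, b) [set q | mdist (F a) (F q.1) < d /\ mdist (F b) (F q.2) < d].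
Proof.
move=> d0.
have Ha := metricType_numDomainType.cvgr_dist_lt (cF a) d0.
have Hb := metricType_numDomainType.cvgr_dist_lt (cF b) d0.
exists ([set t | mdist (F a) (F t) < d], [set t | mdist (F b) (F t) < d]).
  split; [exact: Ha | exact: Hb].
by move=> [s t] [/= Hs Ht].
Qed.

Lemma zit_cont (f g : X -> X) (n : int) :
  continuous f -> continuous g -> continuous (zit f g n).
Proof.
move=> cf cg; case: n => m /=.
  elim: m => [|m IH] /=; first by move=> z; exact: cvg_id.
  by move=> z; apply: continuous_comp; [exact: IH | exact: cf].
elim: m => [|m IH] /=; first by [].
by move=> z; apply: continuous_comp; [exact: IH | exact: cg].
Qed.

End Helpers.
Arguments key_nbhs {R X F} cF a b {d}.
Arguments zit_cont {R X f g} n.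

Theorem lemma2p6 (R : realType) (X : metricType R) (f g : X -> X) (x : X) (c : R) :
  compact [set: X] ->
  homeo_with f g ->
  minimally_expansive_point f g x c ->
  forall y : X, mball x c y ->
  forall eps : R, 0 < eps -> eps < c ->
  exists N : nat,
    forall u v : X, orbit_z f g y u -> orbit_z f g y v ->
      (forall n : int, (- (N%:Z) <= n <= N%:Z)%R ->
         mdist (zit f g n u) (zit f g n v) < c) ->
      mdist u v < eps.
Proof.
move=> cpt [fg [gf [cf cg]]] [c0 Hexp] y yx eps e0 ec.
apply: contrapT => H.
have H' : forall N : nat, exists q : X * X,
    orbit_z f g y q.1 /\ orbit_z f g y q.2 /\
    (forall n : int, - (N%:Z) <= n <= N%:Z ->
       mdist (zit f g n q.1) (zit f g n q.2) < c) /\ eps <= mdist q.1 q.2.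
  move=> N; apply: contrapT => Hn; apply: H; exists N => u v ou ov hn.
  rewrite ltNge; apply/negP => le; apply: Hn; by exists (u, v).
have [w Hw] := choice H'.
pose G := w @ \oo.
have GT : G ([set: X] `*` [set: X]) by exists 0%N.
have [[a b] [_ clab]] := compact_setX cpt cpt _ GT.
have Grange : G (range w) by exists 0%N => // N _; exists N.
have cla : closure (orbit_z f g y) a.
  move=> B nB.
  have [q [[N _ <-] [Bq _]]] := clab _ (B `*` setT) Grange
    (ltac:(by exists (B, setT) => //; split => //; exact: filterT)).
  by exists (w N).1; split => //; case: (Hw N).
have clb : closure (orbit_z f g y) b.
  move=> B nB.
  have [q [[N _ <-] [_ Bq]]] := clab _ (setT `*` B) Grange
    (ltac:(by exists (setT, B) => //; split => //; exact: filterT)).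
  by exists (w N).2; split => //; case: (Hw N) => _ [].
have ab : a <> b.
  move=> eab.
  have GA : G [set q | eps <= mdist q.1 q.2].
    by exists 0%N => // N _; case: (Hw N) => _ [_ []].
  have e20 : 0 < eps / 2 by rewrite divr_gt0.
  have [q [/= Hq [/= H1 H2]]] := clab _ _ GA (@key_nbhs _ _ id (fun z => @cvg_id _ (nbhs z)) a b _ e20).
  have Ht := metric_triangle q.1 a q.2.
  rewrite (metric_sym q.1 a) in Ht.
  move: H1 H2; rewrite /id /= -eab => H1 H2.
  have : eps < eps.
    apply: (le_lt_trans Hq); apply: (le_lt_trans Ht).
    by rewrite [X in _ < X]splitr ltrD.
  by rewrite ltxx.
have [n Hn] := Hexp y yx a b cla clb ab.
set D := mdist _ _ in Hn.
have d0 : 0 < (D - c) / 2 by rewrite divr_gt0 // subr_gt0.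
have GA : G [set q | mdist (zit f g n q.1) (zit f g n q.2) < c].
  exists `|n|%N => // N /= hN; case: (Hw N) => _ [_ [+ _]]; apply.
  rewrite -ler_norml; apply: le_trans (_ : (`|n|%N)%:Z <= N%:Z); last by [].
  by rewrite abszE.
have [q [/= Hq [/= H1 H2]]] :=
  clab _ _ GA (key_nbhs (zit_cont n cf cg) a b d0).
have T1 := metric_triangle (zit f g n a) (zit f g n q.1) (zit f g n b).
have T2 := metric_triangle (zit f g n q.1) (zit f g n q.2) (zit f g n b).
rewrite (metric_sym (zit f g n q.2)) in T2.
rewrite -/D in T1.
move: T1 T2 H1 H2 Hq Hn.
set d1 := mdist _ _; set d2 := mdist _ _; set d3 := mdist _ _; set d4 := mdist _ _.
move=> T1 T2 H1 H2 Hq Hn.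
have : D < D by lra.
by rewrite ltxx.
Qed.
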